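(* Let $\mathcal{Z}$ be a data space with unknown distribution $\mu$, let $S=(Z_1,\dots,Z_n)$ have i.i.d. entries $Z_i\sim\mu$, let the learning algorithm be a Markov kernel $P_{W|S}$ producing a hypothesis $W$ in a hypothesis class $\mathcal{W}$, with $P_W$ the marginal of $W$ and $P_{W,Z_i}$ the joint law of $(W,Z_i)$. Let $l:\mathcal{W}\times\mathcal{Z}\to\mathbb{R}^+$ be a loss function. For each $i=1,\dots,n$ let $\widehat{P}_{W,Z_i}$ be a joint distribution on $\mathcal{W}\times\mathcal{Z}$ such that, when $(W,Z_i)\sim\widehat{P}_{W,Z_i}$, the random variable $l(W,Z_i)$ is $\sigma$-subgaussian. Let $A_i=KL(P_W\otimes\mu\,\|\,\widehat{P}_{W,Z_i})$ and $B_i=KL(P_{W,Z_i}\,\|\,\widehat{P}_{W,Z_i})$. Then $$|\overline{\text{gen}}(P_{W|S},\mu)|\le\frac2n\sum_{i=1}^n\sqrt{\sigma^2(A_i+B_i)}.$$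
   Context: A random variable $X$ is $\sigma$-subgaussian if $\mathbb{E}[e^{\lambda(X-\mathbb{E}X)}]\le e^{\lambda^2\sigma^2/2}$ for all $\lambda\in\mathbb{R}$. Expected generalization error: $\overline{\text{gen}}(P_{W|S},\mu)=\mathbb{E}_{P_{W,S}}\big[\int l(W,z)\,\mu(dz)-\frac1n\sum_{i=1}^n l(W,Z_i)\big]$. $KL$ denotes the Kullback–Leibler divergence with natural logarithm; $P_W\otimes\mu$ is the product measure. *)

(* Defs.v *)
From HB Require Import structures.
From mathcomp Require Import all_boot all_order all_algebra.
From mathcomp Require Import all_classical all_reals all_analysis.
Set Implicit Arguments. Unset Strict Implicit. Unset Printing Implicit Defensive.
Import Order.TTheory GRing.Theory Num.Theory.
Import numFieldNormedType.Exports.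
Local Open Scope classical_set_scope.
Local Open Scope ring_scope.

(* sigma-subgaussian random variable X under the probability P:
   E[exp(lambda (X - E X))] <= exp(lambda^2 sigma^2 / 2) for all real lambda
   (X is required to be integrable, so that E X exists as a real number). *)
Definition subgaussian {d} {T : measurableType d} {R : realType}
    (P : probability T R) (X : T -> R) (sigma : R) : Prop :=
  P.-integrable [set: T] (EFin \o X) /\
  forall lam : R,
    (\int[P]_x (expR (lam * (X x - fine ('E_P[X]))))%:E <=
      (expR (lam ^+ 2 * sigma ^+ 2 / 2))%:E)%E.

Definition KL {d} {T : measurableType d} {R : realType}
    (P Q : probability T R) : \bar R :=
  if pselect (P `<< Q) then
    (\int[P]_x (ln (fine (Radon_Nikodym (charge_of_finite_measure P) Q x)))%:E)%E
  else +oo%E.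

Definition sqrt_sigma2_mul {R : realType} (sigma : R) (x : \bar R) : \bar R :=
  if x == +oo%E then +oo%E else (Num.sqrt (sigma ^+ 2 * fine x))%:E.

(* Main.v *)
Require Import Defs.
From HB Require Import structures.
From mathcomp Require Import all_boot all_order all_algebra.
From mathcomp Require Import all_classical all_reals all_analysis.
From mathcomp Require Import measurable_realfun.
From mathcomp Require Import ring lra.
Import Order.TTheory GRing.Theory Num.Theory.
Import numFieldNormedType.Exports.
Local Open Scope classical_set_scope.
Local Open Scope ring_scope.

Lemma sqrt_bound (R : realType) (D k s2 : R) : 0 <= D -> 0 <= k -> 0 <= s2 ->
  (forall lam, 0 < lam -> lam * D <= k + lam ^+ 2 * s2 / 2) ->
  D <= Num.sqrt (2 * (s2 * k)).
Proof.
move=> D0 k0 s0 H.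
have [->|Dp] := eqVneq D 0; first exact: sqrtr_ge0.
have {Dp} Dp : 0 < D by rewrite lt_def Dp D0.
suff h : D ^+ 2 <= 2 * (s2 * k).
  by rewrite -(ger0_norm D0) -sqrtr_sqr ler_sqrt // mulr_ge0 // mulr_ge0.
have [s20|s2p] := eqVneq s2 0.
  have := H ((k + 1) / D); rewrite divr_gt0 //; last by lra.
  rewrite s20 mulr0 mul0r addr0 -mulrA mulVf ?gt_eqF // mulr1 => /(_ isT); lra.
have {s2p} s2p : 0 < s2 by rewrite lt_def s2p s0.
have := H (D / s2); rewrite divr_gt0 // => /(_ isT) h.
have s2n : s2 != 0 by rewrite gt_eqF.
have e1 : D / s2 * D = D ^+ 2 / s2 by field.
have e2 : (D / s2) ^+ 2 * s2 / 2 = D ^+ 2 / s2 / 2 by field.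
rewrite e1 e2 in h.
have h' : D ^+ 2 / s2 <= 2 * k by lra.
rewrite ler_pdivrMr // in h'.
by rewrite mulrA mulrC; lra.
Qed.

Lemma sqrt_add2 (R : realType) (x y : R) : 0 <= x -> 0 <= y ->
  Num.sqrt (2 * x) + Num.sqrt (2 * y) <= 2 * Num.sqrt (x + y).
Proof.
move=> x0 y0.
set u := Num.sqrt (2 * x); set v := Num.sqrt (2 * y).
have u0 : 0 <= u by apply: sqrtr_ge0.
have v0 : 0 <= v by apply: sqrtr_ge0.
have uu : u ^+ 2 = 2 * x by rewrite sqr_sqrtr // mulr_ge0.
have vv : v ^+ 2 = 2 * y by rewrite sqr_sqrtr // mulr_ge0.
have -> : 2 * Num.sqrt (x + y) = Num.sqrt (4 * (x + y)).
  by rewrite sqrtrM ?ler0n // (_ : 4 = 2 ^+ 2) ?sqrtr_sqr ?ger0_norm //; lra.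
rewrite -(ger0_norm (addr_ge0 u0 v0)) -sqrtr_sqr ler_sqrt; last first.
  by apply: mulr_ge0; lra.
have : 0 <= (u - v) ^+ 2 by apply: sqr_ge0.
rewrite !expr2 in uu vv *. nra.
Qed.

Section Pcst.
Context d (T : measurableType d) (R : realType) (Pr : probability T R).
Local Open Scope ereal_scope.
Lemma int_cstP (c : R) : \int[Pr]_x c%:E = c%:E.
Proof.
have := integral_cst Pr (@measurableT _ T) c%:E.
rewrite /cst => ->.
by rewrite [X in _ * X = _](_ : _ = 1) ?mule1 //; exact: probability_setT.
Qed.
Lemma expectE (X : T -> R) : 'E_Pr[X] = \int[Pr]_x (X x)%:E.
Proof. by rewrite unlock. Qed.
End Pcst.

Section DV.
Context d (T : measurableType d) (R : realType) (P Q : probability T R).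
Hypothesis PQ : P `<< Q.

Local Open Scope ereal_scope.

Lemma ae_dom (p : T -> Prop) : {ae Q, forall x, p x} -> {ae P, forall x, p x}.
Proof.
move=> [N [mN QN sN]]; exists N; split => //.
have QNN : Q.-null_set N.
  move=> A mA AN; apply/eqP; rewrite eq_le measure_ge0 andbT -QN.
  by apply: le_measure => //; rewrite inE.
have PN := PQ _ QNN.
exact: (PN N mN (@subset_refl _ N)).
Qed.

Definition G x := fine (Radon_Nikodym_SigmaFinite.f P Q x).

Lemma G_ge0 x : (0 <= G x)%R.
Proof. by apply: fine_ge0; exact: Radon_Nikodym_SigmaFinite.f_ge0. Qed.

Lemma GE x : Radon_Nikodym_SigmaFinite.f P Q x = (G x)%:E.
Proof. by rewrite /G fineK //; exact: Radon_Nikodym_SigmaFinite.f_fin_num. Qed.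

Lemma mG : measurable_fun setT G.
Proof.
apply/measurable_EFinP.
have -> : EFin \o G = Radon_Nikodym_SigmaFinite.f P Q.
  by apply/funext => x /=; rewrite GE.
exact: measurable_int (Radon_Nikodym_SigmaFinite.f_integrable PQ).
Qed.

Lemma cov (h : T -> \bar R) : (forall x, 0 <= h x) -> measurable_fun setT h ->
  \int[P]_x h x = \int[Q]_x (h x * (G x)%:E).
Proof.
move=> h0 mh.
rewrite -(Radon_Nikodym_SigmaFinite.change_of_variables PQ) //.
by apply: eq_integral => x _; rewrite GE.
Qed.

Definition L x := ln (G x).

Lemma mL : measurable_fun setT L.
Proof. exact: measurableT_comp (@measurable_ln R) mG. Qed.

Lemma KLE : KL P Q = \int[P]_x (L x)%:E.
Proof.
rewrite /KL; case: pselect => [PQ0|//].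
apply: ae_eq_integral => //.
- apply/measurable_EFinP; apply: measurableT_comp (@measurable_ln R) _.
  apply: measurableT_comp (fine_measurable _) _ => //.
- exact/measurable_EFinP/mL.
- have := ae_eq_Radon_Nikodym_SigmaFinite PQ (@measurableT _ T).
  move=> /ae_dom; apply: filterS => x /= h _; rewrite /L /G.
  by rewrite h.
Qed.

Lemma cov_r (k : T -> R) : (forall x, 0 <= k x)%R -> measurable_fun setT k ->
  \int[P]_x (k x)%:E = \int[Q]_x (k x * G x)%:E.
Proof.
move=> k0 mk; rewrite (cov (EFin \o k)) //; last exact/measurable_EFinP.
Qed.

Lemma negL_pt x : (L^\- x * G x <= 1)%R.
Proof.
have := G_ge0 x; rewrite le_eqVlt => /orP[/eqP <-|Gp].
  by rewrite mulr0.
rewrite /funrneg.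
have [L0|L0] := leP (- L x)%R 0%R.
  by rewrite mul0r.
have h : (ln (G x)^-1 < (G x)^-1)%R by apply: ln_sublinear; rewrite invr_gt0.
rewrite lnV ?posrE // in h.
have -> : (1 = (G x)^-1 * G x)%R by rewrite mulVf // gt_eqF.
by rewrite ler_pM2r //; apply: ltW.
Qed.

Lemma negL : \int[P]_x (L^\- x)%:E <= 1.
Proof.
rewrite cov_r //; last exact: measurable_funrneg mL.
apply: (@le_trans _ _ (\int[Q]_x (cst 1 x))).
  apply: ge0_le_integral => //.
  - by move=> x _; rewrite lee_fin mulr_ge0 // G_ge0.
  - by apply/measurable_EFinP; exact: measurable_funM (measurable_funrneg mL) mG.
  - by move=> x _; rewrite lee_fin negL_pt.
by rewrite integral_cst // mul1e; exact: probability_le1.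
Qed.


Lemma DV (g1 g2 : T -> R) : (forall x, 0 <= g1 x)%R -> (forall x, 0 <= g2 x)%R ->
  measurable_fun setT g1 -> measurable_fun setT g2 ->
  \int[Q]_x (expR (g1 x - g2 x))%:E <= 1 ->
  \int[P]_x (g1 x)%:E + \int[P]_x (L^\- x)%:E <=
  \int[P]_x (g2 x)%:E + \int[P]_x (L^\+ x)%:E.
Proof.
move=> g10 g20 mg1 mg2 hQ.
pose Apos := [set x | (0 < G x)%R].
have mA : measurable Apos.
  have mEG : measurable_fun setT (EFin \o G) by exact/measurable_EFinP/mG.
  have := measurable_lte (@measurableT _ T) (measurable_cst (0 : \bar R)) mEG.
  by rewrite setTI.
pose E x := (expR (g1 x - g2 x - L x) * \1_Apos x + (g1 x + 1) * \1_(~` Apos) x)%R.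
have E0 x : (0 <= E x)%R.
  by rewrite /E addr_ge0 // mulr_ge0 // ?expR_ge0 ?addr_ge0 // indicE ler0n.
have mE : measurable_fun setT E.
  apply: measurable_funD; apply: measurable_funM.
  - apply: measurableT_comp (@measurable_expR R) _.
    apply: measurable_funB; first exact: measurable_funB.
    exact: mL.
  - exact: measurable_indic.
  - by apply: measurable_funD => //; exact: measurable_cst.
  - by apply: measurable_indic; exact: measurableC.
have pt x : (g1 x + L^\- x + 1 <= g2 x + L^\+ x + E x)%R.
  rewrite /E /funrneg /funrpos !indicE.
  have [Gp|Gn] := ltP 0%R (G x).
    rewrite (mem_set (Gp : Apos x)) memNset /=; last by rewrite /Apos /=; move=> /negP; rewrite Gp.
    rewrite mulr1 mulr0 addr0.
    have := expR_ge1Dx (g1 x - g2 x - L x).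
    by have [L0|L0] := leP 0%R (L x); have [L1|L1] := leP (- L x)%R 0%R; lra.
  have LE : L x = 0%R by rewrite /L ln0.
  rewrite memNset /=; last by rewrite /Apos /= ltNge Gn.
  rewrite (mem_set (_ : (~` Apos) x)); last by rewrite /Apos /= ltNge Gn.
  rewrite LE oppr0 maxxx mulr0 mulr1 add0r.
  have := g20 x; lra.
have EG x : (E x * G x <= expR (g1 x - g2 x))%R.
  rewrite /E !indicE.
  have [Gp|Gn] := ltP 0%R (G x).
    rewrite (mem_set (Gp : Apos x)) memNset /=; last by rewrite /Apos /=; move=> /negP; rewrite Gp.
    rewrite mulr1 mulr0 addr0 expRD expRN /L lnK ?posrE //.
    by rewrite -mulrA mulVf ?gt_eqF // mulr1.
  have -> : G x = 0%R by apply/eqP; rewrite eq_le Gn G_ge0.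
  by rewrite mulr0 expR_ge0.
have hE : \int[P]_x (E x)%:E <= 1.
  rewrite cov_r //; apply: le_trans hQ.
  apply: ge0_le_integral => //.
  - by move=> x _; rewrite lee_fin mulr_ge0 // G_ge0.
  - by apply/measurable_EFinP; exact: measurable_funM mE mG.
  - apply/measurable_EFinP; apply: measurableT_comp (@measurable_expR R) _.
    exact: measurable_funB.
  - by move=> x _; rewrite lee_fin EG.
have h2 : \int[P]_x ((g1 x + L^\- x)%:E + 1) <= \int[P]_x ((g2 x + L^\+ x)%:E + (E x)%:E).
  apply: ge0_le_integral => //.
  - by move=> x _; rewrite adde_ge0 // lee_fin addr_ge0.
  - apply: emeasurable_funD; last exact: measurable_cst.
    apply/measurable_EFinP; apply: measurable_funD => //; exact: measurable_funrneg mL.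
  - apply: emeasurable_funD; last exact/measurable_EFinP.
    apply/measurable_EFinP; apply: measurable_funD => //; exact: measurable_funrpos mL.
  - by move=> x _; rewrite -!EFinD lee_fin pt.
have mLn : measurable_fun setT (EFin \o (L^\-)%R) by exact/measurable_EFinP/measurable_funrneg/mL.
have mLp : measurable_fun setT (EFin \o (L^\+)%R) by exact/measurable_EFinP/measurable_funrpos/mL.
have mg1' : measurable_fun setT (EFin \o g1) by exact/measurable_EFinP.
have mg2' : measurable_fun setT (EFin \o g2) by exact/measurable_EFinP.
have n1 : forall x, setT x -> 0 <= (g1 x + L^\- x)%:E by move=> x _; rewrite lee_fin addr_ge0.
have n2 : forall x, setT x -> 0 <= (g2 x + L^\+ x)%:E by move=> x _; rewrite lee_fin addr_ge0.
have n3 : forall x, setT x -> 0 <= (E x)%:E by move=> x _; rewrite lee_fin.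
have n4 : forall x, setT x -> 0 <= (g1 x)%:E by move=> x _; rewrite lee_fin.
have n5 : forall x, setT x -> 0 <= (g2 x)%:E by move=> x _; rewrite lee_fin.
have n6 : forall x, setT x -> 0 <= (L^\- x)%:E by move=> x _; rewrite lee_fin.
have n7 : forall x, setT x -> 0 <= (L^\+ x)%:E by move=> x _; rewrite lee_fin.
have m1 : measurable_fun setT (fun x => (g1 x + L^\- x)%:E).
  apply/measurable_EFinP; apply: measurable_funD => //; exact: measurable_funrneg mL.
have m2 : measurable_fun setT (fun x => (g2 x + L^\+ x)%:E).
  apply/measurable_EFinP; apply: measurable_funD => //; exact: measurable_funrpos mL.
have m3 : measurable_fun setT (fun x => (E x)%:E) by exact/measurable_EFinP.
have m4 : measurable_fun setT (fun x : T => (1 : \bar R)) by exact: measurable_cst.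
move: h2.
rewrite ge0_integralD // ge0_integralD //.
under eq_integral do rewrite EFinD.
rewrite ge0_integralD //.
under [X in _ <= X + _]eq_integral do rewrite EFinD.
rewrite ge0_integralD //.
move=> h2'.
rewrite -(@leeD2rE _ 1) //.
have i1 : \int[P]_(x in setT) (1 : \bar R) = 1.
  have := integral_cst P (@measurableT _ T) 1; rewrite mul1e => ->.
  exact: probability_setT.
rewrite i1 in h2'; apply: le_trans h2' _; exact: leeD2l.
Qed.


Lemma KL_bound_dom (l : T -> R) (s : R) : (forall x, 0 <= l x)%R ->
  measurable_fun setT l -> subgaussian Q l s ->
  KL P Q = +oo \/ exists k a : R, [/\ KL P Q = k%:E, (0 <= k)%R,
     \int[P]_x (l x)%:E = a%:E &
     (`|a - fine (\int[Q]_x (l x)%:E)| <= Num.sqrt (2 * (s ^+ 2 * k)))%R].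
Proof.
move=> l0 ml [intl hsg].
have KLE2 : KL P Q = \int[P]_x (L^\+ x)%:E - \int[P]_x (L^\- x)%:E.
  rewrite KLE integralE; congr (_ - _); apply: eq_integral => x _.
  - by rewrite funeposE /funrpos EFin_max.
  - by rewrite funenegE /funrneg EFin_max EFinN.
have Lm0 : 0 <= \int[P]_x (L^\- x)%:E by apply: integral_ge0 => x _; rewrite lee_fin.
have Lp0 : 0 <= \int[P]_x (L^\+ x)%:E by apply: integral_ge0 => x _; rewrite lee_fin.
have Lm1 := negL.
have Lme : \int[P]_x (L^\- x)%:E = (fine (\int[P]_x (L^\- x)%:E))%:E.
  by rewrite fineK // ge0_fin_numE // (le_lt_trans Lm1) // ltry.
set lm := fine _ in Lme.
have [Lpoo|Lpoo] := eqVneq (\int[P]_x (L^\+ x)%:E) +oo.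
  by left; rewrite KLE2 Lpoo Lme.
right.
have Lpe : \int[P]_x (L^\+ x)%:E = (fine (\int[P]_x (L^\+ x)%:E))%:E.
  by rewrite fineK // ge0_fin_numE // ltey.
set lp := fine _ in Lpe.
have mE : \int[Q]_x (l x)%:E = (fine (\int[Q]_x (l x)%:E))%:E.
  by rewrite fineK // integrable_fin_num.
set m := fine _ in mE.
have m0 : (0 <= m)%R by rewrite /m fine_ge0 // integral_ge0 // => x _; rewrite lee_fin.
have hsg' lam : \int[Q]_x (expR (lam * (l x - m)))%:E <= (expR (lam ^+ 2 * s ^+ 2 / 2))%:E.
  by have := hsg lam; rewrite expectE.
have K0 lam : (0 <= lam ^+ 2 * s ^+ 2 / 2)%R.
  by rewrite divr_ge0 // mulr_ge0 // sqr_ge0.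
have hQ lam (g1 g2 : T -> R) :
    (forall x, g1 x - g2 x = - (lam ^+ 2 * s ^+ 2 / 2) + lam * (l x - m))%R ->
    \int[Q]_x (expR (g1 x - g2 x))%:E <= 1.
  move=> hg.
  rewrite (eq_integral (fun x => (expR (- (lam ^+ 2 * s ^+ 2 / 2)))%:E *
      (expR (lam * (l x - m)))%:E)); last first.
    by move=> x _; rewrite hg expRD EFinM.
  rewrite ge0_integralZl //; last first.
    apply/measurable_EFinP; apply: measurableT_comp (@measurable_expR R) _.
    apply: measurable_funM; first exact: measurable_cst.
    by apply: measurable_funB => //; exact: measurable_cst.
  apply: le_trans (lee_wpmul2l _ (hsg' lam)) _; first by rewrite lee_fin expR_ge0.
  by rewrite -EFinM -expRD addNr expR0.
have ml' lam : measurable_fun setT (fun x => lam * l x)%R.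
  by apply: measurable_funM => //; exact: measurable_cst.
have intPl lam : (0 <= lam)%R -> \int[P]_x (lam * l x)%:E = lam%:E * \int[P]_x (l x)%:E.
  move=> lam0; under eq_integral do rewrite EFinM.
  rewrite ge0_integralZl //; first exact/measurable_EFinP.
  by move=> x _; rewrite lee_fin.
have I0 : (lm <= lp)%R.
  have := DV (fun _ => 0%R) (fun _ => 0%R) (fun _ => lexx _) (fun _ => lexx _)
    (measurable_cst _) (measurable_cst _).
  rewrite !int_cstP Lme Lpe subrr expR0 -!EFinD !add0r lee_fin; apply.
  by [].
have I1 lam : (0 < lam)%R -> lam%:E * \int[P]_x (l x)%:E + lm%:E <=
    (lam * m + lam ^+ 2 * s ^+ 2 / 2 + lp)%:E.
  move=> lam0.
  have := DV (fun x => lam * l x)%R (fun _ => lam * m + lam ^+ 2 * s ^+ 2 / 2)%R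
    (fun x => mulr_ge0 (ltW lam0) (l0 x)) (fun _ => addr_ge0 (mulr_ge0 (ltW lam0) m0) (K0 lam))
    (ml' lam) (measurable_cst _).
  rewrite int_cstP Lme Lpe intPl ?(ltW lam0) // EFinD; apply.
  by apply: (hQ lam) => x; lra.
have I2 lam : (0 < lam)%R -> (lam * m + lm)%:E <=
    lam%:E * \int[P]_x (l x)%:E + (lam ^+ 2 * s ^+ 2 / 2 + lp)%:E.
  move=> lam0.
  have := DV (fun _ => lam * m)%R (fun x => lam * l x + lam ^+ 2 * s ^+ 2 / 2)%R
    (fun _ => mulr_ge0 (ltW lam0) m0) (fun x => addr_ge0 (mulr_ge0 (ltW lam0) (l0 x)) (K0 lam))
    (measurable_cst _) (measurable_funD (ml' lam) (measurable_cst _)).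
  have e : \int[P]_x (lam * l x + lam ^+ 2 * s ^+ 2 / 2)%:E =
      lam%:E * \int[P]_x (l x)%:E + (lam ^+ 2 * s ^+ 2 / 2)%:E.
    under eq_integral do rewrite EFinD.
    have n1 : forall x, setT x -> 0 <= (lam * l x)%:E.
      by move=> x _; rewrite lee_fin mulr_ge0 // ltW.
    have m1 : measurable_fun setT (fun x => (lam * l x)%:E) by exact/measurable_EFinP.
    have n2 : forall x : T, setT x -> 0 <= (lam ^+ 2 * s ^+ 2 / 2)%:E.
      by move=> x _; rewrite lee_fin.
    have m2 : measurable_fun setT (fun x : T => (lam ^+ 2 * s ^+ 2 / 2)%:E).
      exact: measurable_cst.
    by rewrite ge0_integralD // int_cstP intPl // ltW.
  rewrite e !int_cstP Lme Lpe -EFinD -addeA -EFinD; apply.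
  by apply: (hQ (- lam)%R) => x; rewrite sqrrN; lra.
have A0 : 0 <= \int[P]_x (l x)%:E by apply: integral_ge0 => x _; rewrite lee_fin.
have Afin : \int[P]_x (l x)%:E \is a fin_num.
  rewrite ge0_fin_numE //.
  have := I1 1%R ltr01; rewrite mul1e => h.
  apply: (@le_lt_trans _ _ (\int[P]_x (l x)%:E + lm%:E)).
    by rewrite leeDl // lee_fin /lm fine_ge0.
  exact: le_lt_trans h (ltry _).
have Ae : \int[P]_x (l x)%:E = (fine (\int[P]_x (l x)%:E))%:E by rewrite fineK.
set a := fine _ in Ae.
rewrite -/m Ae.
exists (lp - lm)%R, a; split => //.
- by rewrite KLE2 Lme Lpe.
- by rewrite subr_ge0.
apply: sqrt_bound; [exact: normr_ge0 | by rewrite subr_ge0 | exact: sqr_ge0 |].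
move=> lam lam0.
have := I1 lam lam0; have := I2 lam lam0.
rewrite Ae -!EFinM -!EFinD !lee_fin => h2 h1.
have [am|am] := leP 0%R (a - m)%R.
  by rewrite ger0_norm // mulrBr; lra.
by rewrite ltr0_norm // mulrN mulrBr; lra.
Qed.

End DV.

Lemma KL_bound d (T : measurableType d) (R : realType) (P Q : probability T R)
  (l : T -> R) (s : R) : (forall x, 0 <= l x)%R ->
  measurable_fun setT l -> subgaussian Q l s ->
  (KL P Q = +oo \/ exists k a : R, [/\ KL P Q = k%:E, (0 <= k)%R,
     \int[P]_x (l x)%:E = a%:E &
     (`|a - fine (\int[Q]_x (l x)%:E)| <= Num.sqrt (2 * (s ^+ 2 * k)))%R])%E.
Proof.
move=> l0 ml sg; have [PQ|nPQ] := pselect (P `<< Q).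
  exact: KL_bound_dom.
by left; rewrite /KL; case: pselect.
Qed.

Arguments KL_bound {d T R} P Q {l s}.

Section Transfer.
Local Open Scope ereal_scope.

Lemma push_int d1 d2 (R : realType) (X : measurableType d1) (Y : measurableType d2)
  (mu : probability X R) (nu : probability Y R) (phi : X -> Y)
  (mphi : measurable_fun setT phi)
  (H : forall C, measurable C -> nu C = mu (phi @^-1` C))
  (f : Y -> \bar R) : measurable_fun setT f -> (forall y, 0 <= f y) ->
  \int[nu]_y f y = \int[mu]_x f (phi x).
Proof.
move=> mf f0.
rewrite (eq_measure_integral (pushforward mu phi)); last first.
  by move=> A mA _; exact: H.
rewrite ge0_integral_pushforward //.
Qed.

Lemma prod_int d1 d2 (R : realType) (W : measurableType d1) (Z : measurableType d2)
  (PW : probability W R) (mu : probability Z R) (PWmu : probability (W * Z)%type R)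
  (H : forall A B, measurable A -> measurable B -> PWmu (A `*` B) = PW A * mu B)
  (f : W * Z -> \bar R) : measurable_fun setT f -> (forall p, 0 <= f p) ->
  \int[PWmu]_p f p = \int[PW]_w (\int[mu]_z f (w, z)).
Proof.
move=> mf f0.
rewrite (eq_measure_integral (PW \x mu)); last first.
  by move=> A mA _; rewrite -(product_measure_unique H mA).
by rewrite fubini_tonelli1.
Qed.

End Transfer.
Arguments push_int {d1 d2 R X Y mu nu phi} mphi H {f}.
Arguments prod_int {d1 d2 R W Z PW mu PWmu} H {f}.

Theorem theorem2 (R : realType) (dW dZ : measure_display)
  (Wsp : measurableType dW) (Zsp : measurableType dZ) (n : nat)
  (mu : probability Zsp R)
  (PS : probability (n.-tuple Zsp) R)
  (kappa : R.-pker (n.-tuple Zsp) ~> Wsp)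
  (PWS : probability (Wsp * n.-tuple Zsp)%type R)
  (PW : probability Wsp R)
  (PWZ : 'I_n -> probability (Wsp * Zsp)%type R)
  (PWmu : probability (Wsp * Zsp)%type R)
  (Phat : 'I_n -> probability (Wsp * Zsp)%type R)
  (l : Wsp * Zsp -> R) (sigma : R) :
  (0 < n)%N ->
  (* S = (Z_1, ..., Z_n) has i.i.d. entries with law mu *)
  (forall A : 'I_n -> set Zsp, (forall i, measurable (A i)) ->
     PS [set s | forall i, A i (tnth s i)] = (\prod_(i < n) mu (A i))%E) ->
  (* joint law of (W, S): S ~ PS and W | S ~ kappa *)
  (forall (A : set Wsp) (B : set (n.-tuple Zsp)), measurable A -> measurable B ->
     PWS (A `*` B) = (\int[PS]_(s in B) kappa s A)%E) ->
  (* P_W is the marginal law of W *)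
  (forall A : set Wsp, measurable A -> PW A = PWS (A `*` setT)) ->
  (* P_{W,Z_i} is the joint law of (W, Z_i) *)
  (forall (i : 'I_n) (C : set (Wsp * Zsp)%type), measurable C ->
     PWZ i C = PWS [set p | C (p.1, tnth p.2 i)]) ->
  (* PWmu = P_W (x) mu *)
  (forall (A : set Wsp) (B : set Zsp), measurable A -> measurable B ->
     PWmu (A `*` B) = (PW A * mu B)%E) ->
  (* the loss is a nonnegative measurable function *)
  measurable_fun [set: Wsp * Zsp] l ->
  (forall p, 0 <= l p) ->
  (* l(W, Z_i) is sigma-subgaussian under Phat i *)
  (forall i, subgaussian (Phat i) l sigma) ->
  let gen := (\int[PWS]_p
      ((\int[mu]_z (l (p.1, z))%:E) -
       ((n%:R)^-1 * \sum_(i < n) l (p.1, tnth p.2 i))%:E))%E in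
  (`| gen | <= (2 / n%:R)%:E *
     \sum_(i < n) sqrt_sigma2_mul sigma (KL PWmu (Phat i) + KL (PWZ i) (Phat i)))%E.
Proof.
move=> n0 _ _ HPW HPWZ HPWmu ml l0 sg.
rewrite [in X in is_true X]/=.
have mEl : measurable_fun setT (EFin \o l) by exact/measurable_EFinP.
have El0 : forall p, (0 <= (EFin \o l) p)%E by move=> p; rewrite /= lee_fin.
pose F := fun w => (\int[mu]_z (l (w, z))%:E)%E.
have mF : measurable_fun setT F.
  exact: (measurable_fun_fubini_tonelli_F (m2 := mu) (EFin \o l) mEl El0).
have F0 w : (0 <= F w)%E by apply: integral_ge0 => z _; rewrite lee_fin.
have M1 : (\int[PWmu]_p (l p)%:E = \int[PWS]_p F p.1)%E.
  rewrite (prod_int HPWmu mEl El0).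
  apply: (push_int measurable_fst) => //.
  move=> A mA; rewrite HPW //; congr (PWS _).
  by apply/seteqP; split => -[x y] //=; case.
have mphi i : measurable_fun setT (fun p : Wsp * n.-tuple Zsp => (p.1, tnth p.2 i)).
  apply: measurable_fun_pair; first exact: measurable_fst.
  exact: measurableT_comp (measurable_tnth i) measurable_snd.
have M2 i : (\int[PWZ i]_p (l p)%:E = \int[PWS]_p (l (p.1, tnth p.2 i))%:E)%E.
  by apply: (push_int (mphi i)) => // C mC; rewrite HPWZ.
have S0 j : (0 <= sqrt_sigma2_mul sigma (KL PWmu (Phat j) + KL (PWZ j) (Phat j)))%E.
  rewrite /sqrt_sigma2_mul; case: ifP => // _; rewrite lee_fin; exact: sqrtr_ge0.
have n0' : (0 < n%:R :> R) by rewrite ltr0n.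
have [[i Hi]|Hall] := pselect (exists i, KL PWmu (Phat i) = +oo%E \/ KL (PWZ i) (Phat i) = +oo%E).
  have Si : sqrt_sigma2_mul sigma (KL PWmu (Phat i) + KL (PWZ i) (Phat i)) = +oo%E.
    rewrite /sqrt_sigma2_mul; case: ifP => // /negbT; apply: contraNeq => _.
    case: (KL_bound PWmu (Phat i) l0 ml (sg i)) => [e1|[k [a [e1 _ _ _]]]];
    case: (KL_bound (PWZ i) (Phat i) l0 ml (sg i)) => [e2|[k' [a' [e2 _ _ _]]]];
    rewrite e1 e2 // in Hi *.
    by case: Hi => -[].
  rewrite (bigD1 i) //= Si addye; last first.
    by rewrite gt_eqF // (lt_le_trans (ltNyr 0%R)) // sume_ge0.
  by rewrite mulry gtr0_sg ?mul1e ?leey // divr_gt0.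
pose al := fine (\int[PWmu]_p (l p)%:E)%E.
pose be i := fine (\int[PWZ i]_p (l p)%:E)%E.
pose mm i := fine (\int[Phat i]_p (l p)%:E)%E.
pose ka i := fine (KL PWmu (Phat i)).
pose kb i := fine (KL (PWZ i) (Phat i)).
have H1 i : [/\ KL PWmu (Phat i) = (ka i)%:E, 0 <= ka i,
    (\int[PWmu]_p (l p)%:E)%E = al%:E &
    `|al - mm i| <= Num.sqrt (2 * (sigma ^+ 2 * ka i))].
  case: (KL_bound PWmu (Phat i) l0 ml (sg i)) => [e|[k [a [e1 e2 e3 e4]]]].
    by exfalso; apply: Hall; exists i; left.
  by rewrite /ka /al e1 e3.
have H2 i : [/\ KL (PWZ i) (Phat i) = (kb i)%:E, 0 <= kb i,
    (\int[PWZ i]_p (l p)%:E)%E = (be i)%:E &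
    `|be i - mm i| <= Num.sqrt (2 * (sigma ^+ 2 * kb i))].
  case: (KL_bound (PWZ i) (Phat i) l0 ml (sg i)) => [e|[k [a [e1 e2 e3 e4]]]].
    by exfalso; apply: Hall; exists i; right.
  by rewrite /kb /be e1 e3.
have Hd i : `|al - be i| <= 2 * Num.sqrt (sigma ^+ 2 * (ka i + kb i)).
  have [_ ka0 _ h1] := H1 i; have [_ kb0 _ h2] := H2 i.
  apply: le_trans (ler_distD (mm i) _ _) _.
  rewrite mulrDr; apply: le_trans _ (@sqrt_add2 R _ _ _ _); last 2 first.
  - by rewrite mulr_ge0 // sqr_ge0.
  - by rewrite mulr_ge0 // sqr_ge0.
  by rewrite distrC in h2; exact: lerD.
have RHS : (\sum_(i < n) sqrt_sigma2_mul sigma (KL PWmu (Phat i) + KL (PWZ i) (Phat i)))%E =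
    (\sum_(i < n) Num.sqrt (sigma ^+ 2 * (ka i + kb i)))%:E.
  rewrite -sumEFin; apply: eq_bigr => i _.
  have [e1 _ _ _] := H1 i; have [e2 _ _ _] := H2 i.
  by rewrite e1 e2 /sqrt_sigma2_mul -EFinD /=.
rewrite RHS -EFinM.
have intF : PWS.-integrable setT (fun p => F p.1).
  apply/integrableP; split; first exact: measurableT_comp mF measurable_fst.
  under eq_integral do rewrite gee0_abs //.
  by rewrite -M1; have [_ _ -> _] := H1 (Ordinal n0); rewrite ltry.
have intl i : PWS.-integrable setT (fun p => (l (p.1, tnth p.2 i))%:E).
  apply/integrableP; split.
    apply/measurable_EFinP; exact: measurableT_comp ml (mphi i).
  under eq_integral do rewrite gee0_abs ?lee_fin //.
  by rewrite -M2; have [_ _ -> _] := H2 i; rewrite ltry.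
have e : (\int[PWS]_p (F p.1 + (- (n%:R^-1 * \sum_(i < n) l (p.1, tnth p.2 i)))%:E))%E =
    (al - n%:R^-1 * \sum_(i < n) be i)%:E.
  rewrite (eq_integral (fun p => F p.1 - (n%:R^-1)%:E * (\sum_(i < n) (l (p.1, tnth p.2 i))%:E)))%E;
    last by move=> p _; rewrite sumEFin -EFinM EFinN.
  rewrite integralB //; last first.
    apply: (integrableZl measurableT); apply: (integrable_sum measurableT) => i _; exact: intl.
  rewrite integralZl //; last by apply: (integrable_sum measurableT) => i _; exact: intl.
  rewrite integral_sum //.
  rewrite -M1 (_ : \sum_(i < n) _ = \sum_(i < n) (be i)%:E)%E; last first.
    by apply: eq_bigr => i _; rewrite -M2; have [_ _ -> _] := H2 i.
  by have [_ _ -> _] := H1 (Ordinal n0); rewrite sumEFin -EFinM -EFinB.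
rewrite e /= lee_fin.
have nn : (n%:R : R) != 0 by rewrite gt_eqF.
have -> : al - n%:R^-1 * \sum_(i < n) be i = n%:R^-1 * \sum_(i < n) (al - be i).
  by rewrite sumrB sumr_const card_ord -mulr_natl; field.
rewrite normrM ger0_norm ?invr_ge0 ?ler0n //.
rewrite [2 / _]mulrC -mulrA ler_wpM2l ?invr_ge0 ?ler0n // mulr_sumr.
apply: le_trans (ler_norm_sum _ _ _) _.
by apply: ler_sum => i _; exact: Hd.
Qed.
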